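(* In the timely decision problem described in the context, fix $\eta$ and $\nu\in\{0,1\}$. Let $Q^*(\mu,\nu;\eta)=\inf_{\lambda\in\Lambda}Q^*_\lambda(\mu,\nu;\eta)$ and $\bar Q(\mu,\nu;\eta)=\inf_{\hat\theta\in\Theta}\bar Q_{\hat\theta}(\mu,\nu;\eta)$, and let $m_\theta\in\Delta(\Theta)$ denote the vertex (point mass) at $\theta$. Then $\mu\mapsto Q^*(\mu,\nu;\eta)$ is concave on $\Delta(\Theta)$, and $Q^*(m_\theta,\nu;\eta)>\bar Q(m_\theta,\nu;\eta)$ for every $\theta\in\Theta$. Hence the termination set $\mathcal{T}(\eta)=\{\mu\in\Delta(\Theta):Q^*(\mu,\nu;\eta)\ge\bar Q(\mu,\nu;\eta)\}$ is the (disjoint) union of $|\Theta|$ convex regions delimited by the intersection of $Q^*$ and $\bar Q$, and it contains each vertex of the simplex; the (possibly empty) continuation set is its complement $\Delta(\Theta)\setminus\mathcal{T}(\eta)$.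
   Context: $\Theta,\Lambda,\Omega$ finite nonempty; $\Delta(\Theta)$ the simplex. For $\theta\in\Theta,\lambda\in\Lambda$: known distributions $q_{\theta,\lambda}$ on $\Omega$ and $p_{\theta,\lambda}\in(0,1)$. Latent $\theta\sim\mu_0$. Survival $\nu_t$, $\nu_0=1$. At time $t$ with $\nu_t=1$ the agent either commits to a decision $\hat\theta\in\Theta$ (time $\sigma=t$) or performs $\lambda_t\in\Lambda$; given $\theta$, $\nu_{t+1}=0$ w.p. $p_{\theta,\lambda_t}$, else $\nu_{t+1}=1$ and $\omega_{t+1}\sim q_{\theta,\lambda_t}$ is observed. Deadline $\delta=\min\{t:\nu_t=0\}$, $\tau=\min\{\delta,\sigma\}$. Posterior updates: $M(\lambda,\mu,\omega)(\theta)\propto(1-p_{\theta,\lambda})q_{\theta,\lambda}(\omega)\mu(\theta)$ after survival and outcome $\omega$, $\bar M(\lambda,\mu)(\theta)\propto p_{\theta,\lambda}\mu(\theta)$ after death. Costs $c_\lambda>0$; weights $\eta=(\eta_a,\eta_b,\eta_c)$ with positive entries indexed by $\Theta,\Theta,\Lambda$. Loss $\ell=\sum_{\theta'}\eta_{a,\theta'}\mathbf 1\{\theta=\theta',\theta\neq\hat\theta,\tau<\delta\}+\sum_{\theta'}\eta_{b,\theta'}\mathbf 1\{\theta=\theta',\tau=\delta\}+\sum_{t<\tau}\eta_{c,\lambda_t}c_{\lambda_t}$. Strategies map $(\mu_t,\nu_t)$ to distributions on $\Lambda\cup\Theta$; $V^*(\mu,\nu;\eta)$ is the infimum over strategies of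 the expected to-go loss (loss minus already incurred acquisition costs) from posterior $\mu$ and survival state $\nu$. Decision factors: $\bar Q_{\hat\theta}(\mu,\nu;\eta)=(1-\nu)\sum_{\theta'}\eta_{b,\theta'}\mu(\theta')+\nu\sum_{\theta'\neq\hat\theta}\eta_{a,\theta'}\mu(\theta')$. Optimal acquisition factors: $Q^*_\lambda(\mu,\nu;\eta)=(1-\nu)V^*(\mu,0;\eta)+\eta_{c,\lambda}c_\lambda+\nu\big(V^*(\bar M(\lambda,\mu),0;\eta)\sum_{\theta'}p_{\theta',\lambda}\mu(\theta')+\sum_{\omega}V^*(M(\lambda,\mu,\omega),1;\eta)\sum_{\theta'}(1-p_{\theta',\lambda})q_{\theta',\lambda}(\omega)\mu(\theta')\big)$. *)

(* Defs.v *)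
From HB Require Import structures.
From mathcomp Require Import all_boot all_order all_algebra.
From mathcomp Require Import all_classical all_reals all_analysis.
Set Implicit Arguments. Unset Strict Implicit. Unset Printing Implicit Defensive.
Import Order.TTheory GRing.Theory Num.Theory.
Local Open Scope ring_scope.
Local Open Scope classical_set_scope.

Section TDP.
Variables (R : realType) (Th La Om : finType).

Record model := Model {
  q_ : Th -> La -> Om -> R;
  p_ : Th -> La -> R;
  c_ : La -> R }.

Record weights := Weights {
  eta_a : Th -> R;
  eta_b : Th -> R;
  eta_c : La -> R }.

Definition model_wf (D : model) : Prop :=
  [/\ forall th l w, 0 <= q_ D th l w,
      forall th l, \sum_w q_ D th l w = 1,
      forall th l, 0 < p_ D th l < 1
    & forall l, 0 < c_ D l].

Definition weights_pos (e : weights) : Prop :=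
  [/\ forall th, 0 < eta_a e th, forall th, 0 < eta_b e th
    & forall l, 0 < eta_c e l].

Definition belief := Th -> R.

Definition in_simplex (mu : belief) : Prop :=
  (forall th, 0 <= mu th) /\ \sum_th mu th = 1.

Definition vertex (th : Th) : belief := fun th' => (th' == th)%:R.

Definition convcomb (t : R) (mu1 mu2 : belief) : belief :=
  fun th => t * mu1 th + (1 - t) * mu2 th.

(* probability of death / of surviving with outcome w, under belief mu *)
Definition Pdeath (D : model) (l : La) (mu : belief) : R :=
  \sum_th p_ D th l * mu th.
Definition Pobs (D : model) (l : La) (mu : belief) (w : Om) : R :=
  \sum_th (1 - p_ D th l) * q_ D th l w * mu th.

Definition Mupd (D : model) (l : La) (mu : belief) (w : Om) : belief :=
  fun th => (1 - p_ D th l) * q_ D th l w * mu th / Pobs D l mu w.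
Definition Mbar (D : model) (l : La) (mu : belief) : belief :=
  fun th => p_ D th l * mu th / Pdeath D l mu.

Definition Qbar_th (e : weights) (thh : Th) (mu : belief) (nu : bool) : R :=
  (1 - nu%:R) * (\sum_th eta_b e th * mu th)
  + nu%:R * (\sum_(th | th != thh) eta_a e th * mu th).

(* Stationary randomized strategies: (mu, nu) |-> distribution on Lambda + Theta
   (inl l = acquire with action l, inr thh = commit to decision thh). *)
Definition strategy := belief -> bool -> (La + Th)%type -> R.

Definition strategy_ok (s : strategy) : Prop :=
  forall mu nu, (forall a, 0 <= s mu nu a) /\ \sum_a s mu nu a = 1.

(* Expected to-go loss counting only the first n steps of the process
   (paths not terminated within the horizon contribute only their accrued
   acquisition costs).  This is nondecreasing in n and its supremum is the
   expected to-go loss (monotone convergence). *)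
Fixpoint Jn (D : model) (e : weights) (s : strategy) (n : nat)
    (mu : belief) (nu : bool) : R :=
  match n with
  | 0 => 0
  | n'.+1 =>
    if ~~ nu then \sum_th eta_b e th * mu th
    else \sum_(a : (La + Th)%type) s mu nu a *
      match a with
      | inr thh => \sum_(th | th != thh) eta_a e th * mu th
      | inl l => eta_c e l * c_ D l
                 + Pdeath D l mu * Jn D e s n' (Mbar D l mu) false
                 + \sum_w Pobs D l mu w * Jn D e s n' (Mupd D l mu w) true
      end
  end.

Definition Loss (D : model) (e : weights) (s : strategy) (mu : belief)
    (nu : bool) : \bar R :=
  ereal_sup (range (fun n => (Jn D e s n mu nu)%:E)).

Definition Vstar (D : model) (e : weights) (mu : belief) (nu : bool) : \bar R :=
  ereal_inf [set Loss D e s mu nu | s in strategy_ok].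

Definition Qstar_l (D : model) (e : weights) (l : La) (mu : belief)
    (nu : bool) : \bar R :=
  ((1 - nu%:R)%:E * Vstar D e mu false + (eta_c e l * c_ D l)%:E
   + (nu%:R)%:E * ((Pdeath D l mu)%:E * Vstar D e (Mbar D l mu) false
      + \sum_w (Pobs D l mu w)%:E * Vstar D e (Mupd D l mu w) true))%E.

Definition Qstar (D : model) (e : weights) (mu : belief) (nu : bool) : \bar R :=
  ereal_inf (range (fun l => Qstar_l D e l mu nu)).

Definition Qbar (e : weights) (mu : belief) (nu : bool) : \bar R :=
  ereal_inf (range (fun thh => (Qbar_th e thh mu nu)%:E)).

Definition Tset (D : model) (e : weights) (nu : bool) : set belief :=
  [set mu | in_simplex mu /\ (Qbar e mu nu <= Qstar D e mu nu)%E].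

Definition Treg (D : model) (e : weights) (nu : bool) (thh : Th) : set belief :=
  [set mu | in_simplex mu /\ ((Qbar_th e thh mu nu)%:E <= Qstar D e mu nu)%E].

Definition Cset (D : model) (e : weights) (nu : bool) : set belief :=
  [set mu | in_simplex mu] `\` Tset D e nu.

End TDP.

(* Main.v *)
Require Import Defs.
From HB Require Import structures.
From mathcomp Require Import all_boot all_order all_algebra.
From mathcomp Require Import all_classical all_reals all_analysis.
From mathcomp Require Import ring lra.
Import Order.TTheory GRing.Theory Num.Theory.
Local Open Scope ring_scope.
Local Open Scope classical_set_scope.
Set Implicit Arguments. Unset Strict Implicit. Unset Printing Implicit Defensive.

Section MinR.
Variable R : realType.

Definition minR (I : finType) (i0 : I) (f : I -> R) : R := \big[Order.min/f i0]_i f i.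

Lemma minR_le (I : finType) (i0 : I) (f : I -> R) i : minR i0 f <= f i.
Proof. exact: bigmin_le. Qed.

Lemma minR_ge (I : finType) (i0 : I) (f : I -> R) y :
  (forall i, y <= f i) -> y <= minR i0 f.
Proof. by move=> H; apply: le_bigmin => // i _. Qed.

Lemma minR_ex (I : finType) (i0 : I) (f : I -> R) : exists i, minR i0 f == f i.
Proof.
rewrite /minR; apply: (big_ind (fun x => exists i, x == f i)).
- by exists i0.
- move=> x y [i /eqP->] [j /eqP->]; rewrite /Order.min.
  by case: ifP => _; [exists i | exists j].
- by move=> i _; exists i.
Qed.

Lemma minR_mono (I : finType) (i0 : I) (f g : I -> R) c :
  (forall i, f i <= g i + c) -> minR i0 f <= minR i0 g + c.
Proof.
move=> H; have [i /eqP ->] := minR_ex i0 g.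
exact: le_trans (minR_le i0 f i) (H i).
Qed.


Lemma einf_range (I : finType) (i0 : I) (f : I -> R) :
  ereal_inf (range (fun i => (f i)%:E)) = (minR i0 f)%:E.
Proof.
apply/eqP; rewrite eq_le; apply/andP; split.
- have [i /eqP ->] := minR_ex i0 f.
  by apply: ereal_inf_lbound; exists i.
- apply: le_ereal_inf_tmp => _ [i _ <-].
  by rewrite lee_fin minR_le.
Qed.

Lemma sup_le_ereal (a : nat -> R) (x : \bar R) :
  has_sup (range a) -> (forall n, (a n)%:E <= x)%E ->
  ((sup (range a))%:E <= x)%E.
Proof.
move=> hs H; case: x H => [r| |] H.
- rewrite lee_fin; apply: ge_sup; first by exists (a 0%N), 0%N.
  by move=> _ [n _ <-]; have := H n; rewrite lee_fin.
- exact: leey.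
- by have := H 0%N; rewrite leeNy_eq.
Qed.

End MinR.

Section Basic.
Variables (R : realType) (Th La Om : finType).
Variables (D : model R Th La Om) (e : weights R Th La).
Hypothesis Hwf : model_wf D.
Hypothesis Hpos : weights_pos e.
Implicit Types (mu : belief R Th) (t : R).

Definition nonneg (mu : belief R Th) := forall th, 0 <= mu th.

Lemma conv_sum (P : pred Th) (g : Th -> R) t (mu1 mu2 : belief R Th) :
  \sum_(th | P th) g th * convcomb t mu1 mu2 th =
  t * \sum_(th | P th) g th * mu1 th + (1 - t) * \sum_(th | P th) g th * mu2 th.
Proof.
rewrite !mulr_sumr -big_split; apply: eq_bigr => th _; rewrite /convcomb /=; ring.
Qed.

Lemma simplex_nonneg mu : in_simplex mu -> nonneg mu.
Proof. by case. Qed.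

Lemma simplex_conv t mu1 mu2 : in_simplex mu1 -> in_simplex mu2 -> 0 <= t <= 1 ->
  in_simplex (convcomb t mu1 mu2).
Proof.
move=> [h1 s1] [h2 s2] /andP[t0 t1]; split.
- move=> th; rewrite /convcomb addr_ge0 // mulr_ge0 //; lra.
- have := conv_sum predT (fun=> 1) t mu1 mu2.
  under eq_bigr do rewrite mul1r.
  under [X in _ = _ * X + _]eq_bigr do rewrite mul1r.
  under [X in _ = _ + _ * X]eq_bigr do rewrite mul1r.
  by move=> ->; rewrite s1 s2; ring.
Qed.

Let q0 : forall th l w, 0 <= q_ D th l w. Proof. by case: Hwf. Qed.
Let q1 : forall th l, \sum_w q_ D th l w = 1. Proof. by case: Hwf. Qed.
Let p01 : forall th l, 0 < p_ D th l < 1. Proof. by case: Hwf. Qed.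
Let c0 : forall l, 0 < c_ D l. Proof. by case: Hwf. Qed.

Lemma p_gt0 th l : 0 < p_ D th l. Proof. by case/andP: (p01 th l). Qed.
Lemma p_ge0 th l : 0 <= p_ D th l. Proof. exact/ltW/p_gt0. Qed.
Lemma omp_ge0 th l : 0 <= 1 - p_ D th l.
Proof. by case/andP: (p01 th l) => _ h; rewrite subr_ge0 ltW. Qed.
Lemma obsw_ge0 th l w : 0 <= (1 - p_ D th l) * q_ D th l w.
Proof. by rewrite mulr_ge0 // omp_ge0. Qed.

Lemma Pdeath_ge0 l mu : nonneg mu -> 0 <= Pdeath D l mu.
Proof. by move=> h; apply: sumr_ge0 => th _; rewrite mulr_ge0 // p_ge0. Qed.

Lemma Pobs_ge0 l mu w : nonneg mu -> 0 <= Pobs D l mu w.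
Proof. by move=> h; apply: sumr_ge0 => th _; rewrite mulr_ge0 // obsw_ge0. Qed.

Lemma Pobs0_num l mu w : nonneg mu -> Pobs D l mu w = 0 ->
  forall th, (1 - p_ D th l) * q_ D th l w * mu th = 0.
Proof.
move=> h /eqP; rewrite /Pobs psumr_eq0 => [/allP H th|th _]; last first.
  by rewrite mulr_ge0 // obsw_ge0.
by apply/eqP; apply: (H th); rewrite mem_index_enum.
Qed.

Lemma Pdeath_sum l mu : Pdeath D l mu + \sum_w Pobs D l mu w = \sum_th mu th.
Proof.
rewrite /Pobs exchange_big /= /Pdeath -big_split /=; apply: eq_bigr => th _.
rewrite -mulr_suml.
by rewrite -mulr_sumr q1; ring.
Qed.

Lemma simplex_pos mu : in_simplex mu -> exists th, 0 < mu th.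
Proof.
move=> [h s]; case: (boolp.pselect (exists th, 0 < mu th)) => // H.
have : \sum_th mu th <= 0.
  apply: sumr_le0 => th _; move: (h th); rewrite le_eqVlt.
  case/orP => [/eqP <-//|H1]; by exfalso; apply: H; exists th.
by rewrite s ler10.
Qed.

Lemma Pdeath_gt0 l mu : in_simplex mu -> 0 < Pdeath D l mu.
Proof.
move=> hs; have [th hth] := simplex_pos hs; have h := simplex_nonneg hs.
rewrite /Pdeath (bigD1 th) //= ltr_pwDl //; first by rewrite mulr_gt0 // p_gt0.
by apply: sumr_ge0 => i _; rewrite mulr_ge0 // p_ge0.
Qed.

Lemma sumPobs_le1 l mu : in_simplex mu -> \sum_w Pobs D l mu w <= 1.
Proof.
move=> hs; have := Pdeath_sum l mu; case: hs => h ->.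
have := Pdeath_ge0 l h; lra.
Qed.

Lemma Mupd_nonneg l mu w : nonneg mu -> nonneg (Mupd D l mu w).
Proof.
move=> h th; rewrite /Mupd. apply: divr_ge0. apply: mulr_ge0 => //. exact: obsw_ge0. exact: Pobs_ge0.
Qed.

Lemma Mbar_nonneg l mu : nonneg mu -> nonneg (Mbar D l mu).
Proof.
move=> h th; rewrite /Mbar. apply: divr_ge0. apply: mulr_ge0 => //. exact: p_ge0. exact: Pdeath_ge0.
Qed.

Lemma Mupd_simplex l mu w : nonneg mu -> 0 < Pobs D l mu w ->
  in_simplex (Mupd D l mu w).
Proof.
move=> h hp; split; first exact: Mupd_nonneg.
by rewrite /Mupd -mulr_suml mulfV // gt_eqF.
Qed.

End Basic.

Section Value.
Variables (R : realType) (Th La Om : finType).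
Variables (D : model R Th La Om) (e : weights R Th La).
Hypothesis Hwf : model_wf D.
Hypothesis Hpos : weights_pos e.
Variable th0 : Th.
Implicit Types (mu x : belief R Th) (t : R).

Definition dec thh mu := \sum_(th | th != thh) eta_a e th * mu th.
Definition Jf (n : nat) x : R := if n is 0 then 0 else \sum_th eta_b e th * x th.
Definition acq (V Vd : belief R Th -> R) l mu :=
  eta_c e l * c_ D l + Pdeath D l mu * Vd (Mbar D l mu)
  + \sum_w Pobs D l mu w * V (Mupd D l mu w).
Definition stuff (V Vd : belief R Th -> R) (a : (La + Th)%type) mu :=
  match a with inl l => acq V Vd l mu | inr thh => dec thh mu end.

Lemma JnF s n x : Jn D e s n x false = Jf n x.
Proof. by case: n. Qed.

Lemma JnT s n mu : Jn D e s n.+1 mu true =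
  \sum_a s mu true a * stuff (fun x => Jn D e s n x true) (Jf n) a mu.
Proof. simpl. apply: eq_bigr => -[l|thh] _ //. by rewrite /stuff /acq JnF. Qed.

Fixpoint Hn n : belief R Th -> R :=
  if n is n'.+1 then fun mu => minR (inr th0) (fun a => stuff (Hn n') (Jf n') a mu)
  else fun _ => 0.

Let ea0 th : 0 < eta_a e th. Proof. by case: Hpos. Qed.
Let eb0 th : 0 < eta_b e th. Proof. by case: Hpos. Qed.
Let ec0 l : 0 < eta_c e l. Proof. by case: Hpos. Qed.
Let c0 l : 0 < c_ D l. Proof. by case: Hwf. Qed.

Lemma dec_ge0 thh mu : nonneg mu -> 0 <= dec thh mu.
Proof. by move=> h; apply: sumr_ge0 => th _; rewrite mulr_ge0 // ltW. Qed.

Lemma Jf_ge0 n x : nonneg x -> 0 <= Jf n x.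
Proof. by case: n => //= n h; apply: sumr_ge0 => th _; rewrite mulr_ge0 // ltW. Qed.

Lemma Jf_le n m x : nonneg x -> (0 < m)%N -> Jf n x <= Jf m x.
Proof. case: n => [|n] h; case: m => // m _; exact: Jf_ge0. Qed.

Lemma Hn_ub n mu : Hn n mu <= Num.max 0 (dec th0 mu).
Proof.
case: n => [|n] /=; first by rewrite le_max lexx.
by apply: le_trans (minR_le _ _ (inr th0)) _; rewrite le_max lexx orbT.
Qed.

Lemma Pobs_cases l mu w : nonneg mu ->
  Pobs D l mu w = 0 \/ 0 < Pobs D l mu w.
Proof.
move=> h; have := Pobs_ge0 Hwf l w h; rewrite le_eqVlt => /orP[/eqP<-|->]; by [left|right].
Qed.

Lemma stuff_mono V1 V2 Vd1 Vd2 a mu : in_simplex mu ->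
  (forall x, in_simplex x -> V1 x <= V2 x) ->
  (forall x, nonneg x -> Vd1 x <= Vd2 x) ->
  stuff V1 Vd1 a mu <= stuff V2 Vd2 a mu.
Proof.
move=> hs hV hVd; case: a => [l|thh] //=; rewrite /acq.
have h := simplex_nonneg hs.
rewrite lerD // ?lerD // ?ler_wpM2l // ?Pdeath_ge0 ?hVd //; first exact: Mbar_nonneg.
apply: ler_sum => w _; case: (Pobs_cases l w h) => [->|hp]; first by rewrite !mul0r.
apply: ler_wpM2l; [exact: ltW|apply: hV; exact: Mupd_simplex].
Qed.

Lemma stuff_ge0 V Vd a mu : in_simplex mu ->
  (forall x, in_simplex x -> 0 <= V x) ->
  (forall x, nonneg x -> 0 <= Vd x) -> 0 <= stuff V Vd a mu.
Proof.
move=> hs hV hVd; have h := simplex_nonneg hs.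
case: a => [l|thh] /=; last exact: dec_ge0.
rewrite /acq; apply: addr_ge0; first apply: addr_ge0.
- by apply: mulr_ge0; apply: ltW.
- apply: mulr_ge0; first exact: Pdeath_ge0.
  by apply: hVd; exact: Mbar_nonneg.
apply: sumr_ge0 => w _; case: (Pobs_cases l w h) => [->|hp]; first by rewrite mul0r.
apply: mulr_ge0; [exact: ltW|apply: hV; exact: Mupd_simplex].
Qed.

Lemma Hn_ge0 n mu : in_simplex mu -> 0 <= Hn n mu.
Proof.
elim: n mu => [//|n IH] mu hs /=; apply: minR_ge => a.
apply: stuff_ge0 => // x hx; exact: Jf_ge0.
Qed.

Lemma Hn_mono1 n mu : in_simplex mu -> Hn n mu <= Hn n.+1 mu.
Proof.
elim: n mu => [|n IH] mu hs; first exact: (Hn_ge0 1).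
rewrite [Hn n.+2 mu]/= -[X in _ <= X]addr0; apply: minR_mono => a; rewrite addr0.
apply: stuff_mono => // x hx; exact: Jf_le.
Qed.

Lemma Hn_mono n m mu : in_simplex mu -> (n <= m)%N -> Hn n mu <= Hn m mu.
Proof.
move=> hs /subnKC <-; elim: (m - n)%N => [|k IH]; first by rewrite addn0.
by apply: le_trans IH _; rewrite addnS; exact: Hn_mono1.
Qed.

Lemma hsup mu : has_sup (range (fun n => Hn n mu)).
Proof.
split; first by exists (Hn 0 mu), 0%N.
by exists (Num.max 0 (dec th0 mu)) => _ [n _ <-]; exact: Hn_ub.
Qed.

Definition H mu := sup (range (fun n => Hn n mu)).

Lemma H_ge n mu : Hn n mu <= H mu.
Proof. by apply: sup_upper_bound (hsup mu) _ _; exists n. Qed.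

Lemma H_ge0 mu : 0 <= H mu.
Proof. exact: (H_ge 0). Qed.

Lemma H_approx mu eps : in_simplex mu -> 0 < eps ->
  exists N, forall m, (N <= m)%N -> H mu - eps < Hn m mu.
Proof.
move=> hs he; have [_ [N _ <-] hN] := sup_adherent he (hsup mu).
by exists N => m hm; apply: lt_le_trans hN _; exact: Hn_mono.
Qed.

Lemma H_approx_fin (I : finType) (xs : I -> belief R Th) (P : I -> Prop) eps :
  (forall i, P i -> in_simplex (xs i)) -> 0 < eps ->
  exists N, forall i m, P i -> (N <= m)%N -> H (xs i) - eps < Hn m (xs i).
Proof.
move=> hP he.
have : forall i, exists n, P i -> forall m, (n <= m)%N -> H (xs i) - eps < Hn m (xs i).
  move=> i; case: (boolp.pselect (P i)) => Pi; last by exists 0%N.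
  by have [N HN] := H_approx (hP i Pi) he; exists N.
move=> /boolp.choice [f Hf]; exists (\max_i f i) => i m Pi hm.
by apply: (Hf i Pi); apply: leq_trans hm; exact: leq_bigmax.
Qed.

End Value.

Section Greedy.
Variables (R : realType) (Th La Om : finType).
Variables (D : model R Th La Om) (e : weights R Th La).
Hypothesis Hwf : model_wf D.
Hypothesis Hpos : weights_pos e.
Variable th0 : Th.
Implicit Types (mu x : belief R Th) (t : R).

Notation HH := (H D e th0).
Notation HN := (Hn D e th0).

Definition stH (a : (La + Th)%type) mu := stuff D e HH (Jf e 1) a mu.
Definition amin mu : (La + Th)%type := xchoose (minR_ex (inr th0) (fun a => stH a mu)).

Lemma amin_min mu : stH (amin mu) mu = minR (inr th0) (fun a => stH a mu).
Proof. by apply/esym/eqP; exact: (xchooseP (minR_ex (inr th0) (fun a => stH a mu))). Qed.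

Lemma TH_le mu : in_simplex mu -> stH (amin mu) mu <= HH mu.
Proof.
move=> hs; have h := simplex_nonneg hs.
apply/ler_addgt0Pr => eps he.
have [N HN'] := @H_approx_fin _ _ _ _ D e Hwf Hpos th0 (La * Om)%type
  (fun i => Mupd D i.1 mu i.2) (fun i => 0 < Pobs D i.1 mu i.2) eps
  (fun i hi => Mupd_simplex Hwf h hi) he.
rewrite amin_min; apply: le_trans (_ : _ <= HN N.+2 mu + eps) _; last first.
  by rewrite lerD2r; exact: H_ge.
rewrite [HN N.+2 mu]/=; apply: minR_mono => -[l|thh] /=; last by rewrite lerDl ltW.
change (acq D e HH (Jf e 1) l mu <= acq D e (HN N.+1) (Jf e N.+1) l mu + eps).
have -> : Jf e N.+1 = Jf e 1 by [].
rewrite /acq -!addrA !lerD2l.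
apply: le_trans (_ : _ <= \sum_w (Pobs D l mu w * HN N.+1 (Mupd D l mu w)
                                   + Pobs D l mu w * eps)) _.
  apply: ler_sum => w _; case: (Pobs_cases Hwf l w h) => [->|hp].
    by rewrite !mul0r addr0.
  rewrite -mulrDr ler_wpM2l ?ltW //.
  have := HN' (l, w) N.+1 hp (leqnSn N); rewrite /=; lra.
rewrite big_split /= lerD2l -mulr_suml.
by rewrite ger_pMl // sumPobs_le1.
Qed.

Definition sg : strategy R Th La := fun mu nu a => (a == amin mu)%:R.

Lemma sg_ok : strategy_ok sg.
Proof.
move=> mu nu; split=> [a|]; first exact: ler0n.
rewrite (bigD1 (amin mu)) //= /sg eqxx big1 ?addr0 // => a /negbTE ->.
by [].
Qed.

Lemma sum_sg (F : (La + Th)%type -> R) mu nu :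
  \sum_a sg mu nu a * F a = F (amin mu).
Proof.
rewrite (bigD1 (amin mu)) //= /sg eqxx mul1r big1 ?addr0 // => a /negbTE ->.
by rewrite mul0r.
Qed.

Lemma Jn_sg_le n mu : in_simplex mu -> Jn D e sg n mu true <= HH mu.
Proof.
elim: n mu => [|n IH] mu hs; first exact: H_ge0.
rewrite JnT sum_sg; apply: le_trans (TH_le hs).
rewrite /stH; apply: stuff_mono => // x hx.
exact: (Jf_le Hpos).
Qed.

Lemma Jn_ge s n mu : strategy_ok s -> in_simplex mu -> HN n mu <= Jn D e s n mu true.
Proof.
move=> hok; elim: n mu => [|n IH] mu hs; first by [].
rewrite JnT [HN n.+1 mu]/=.
have [s0 s1] := hok mu true.
set m := minR _ _.
have -> : m = \sum_a s mu true a * m by rewrite -mulr_suml s1 mul1r.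
apply: ler_sum => a _; apply: ler_wpM2l => //.
apply: le_trans (minR_le _ _ a) _.
apply: stuff_mono => // x hx; exact: IH.
Qed.

Lemma Loss_false s x : nonneg x -> Loss D e s x false = (Jf e 1 x)%:E.
Proof.
move=> h; apply/eqP; rewrite eq_le; apply/andP; split.
- apply: ge_ereal_sup => _ [n _ <-]; rewrite JnF lee_fin; exact: (Jf_le Hpos).
- by apply: ereal_sup_ubound; exists 1%N; rewrite // JnF.
Qed.

Lemma Vstar_false x : nonneg x -> Vstar D e x false = (Jf e 1 x)%:E.
Proof.
move=> h; apply/eqP; rewrite eq_le; apply/andP; split.
- by rewrite -(Loss_false sg h); apply: ereal_inf_lbound; exists sg => //; exact: sg_ok.
- by apply: le_ereal_inf_tmp => _ [s hs <-]; rewrite Loss_false.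
Qed.

Lemma Vstar_true mu : in_simplex mu -> Vstar D e mu true = (HH mu)%:E.
Proof.
move=> hs; apply/eqP; rewrite eq_le; apply/andP; split.
- apply: le_trans (_ : _ <= Loss D e sg mu true)%E _.
    by apply: ereal_inf_lbound; exists sg => //; exact: sg_ok.
  apply: ge_ereal_sup => _ [n _ <-]; rewrite lee_fin; exact: Jn_sg_le.
- apply: le_ereal_inf_tmp => _ [s hok <-].
  apply: sup_le_ereal; first exact: hsup.
  move=> n; apply: le_trans (_ : _ <= (Jn D e s n mu true)%:E)%E _.
    by rewrite lee_fin; exact: Jn_ge.
  by apply: ereal_sup_ubound; exists n.
Qed.

End Greedy.

Section Conc.
Variables (R : realType) (Th La Om : finType).
Variables (D : model R Th La Om) (e : weights R Th La).
Hypothesis Hwf : model_wf D.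
Hypothesis Hpos : weights_pos e.
Implicit Types (mu x : belief R Th) (t : R).

Definition concave_on (f : belief R Th -> R) := forall mu1 mu2 t,
  in_simplex mu1 -> in_simplex mu2 -> 0 <= t <= 1 ->
  t * f mu1 + (1 - t) * f mu2 <= f (convcomb t mu1 mu2).

Lemma PobsE l t mu1 mu2 w : Pobs D l (convcomb t mu1 mu2) w =
  t * Pobs D l mu1 w + (1 - t) * Pobs D l mu2 w.
Proof. exact: (conv_sum predT). Qed.

Lemma persp_zero (V : belief R Th -> R) l w mu1 mu2 t :
  in_simplex mu1 -> in_simplex mu2 -> 0 <= t <= 1 -> Pobs D l mu1 w = 0 ->
  t * (Pobs D l mu1 w * V (Mupd D l mu1 w)) + (1 - t) * (Pobs D l mu2 w * V (Mupd D l mu2 w))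
  <= Pobs D l (convcomb t mu1 mu2) w * V (Mupd D l (convcomb t mu1 mu2) w).
Proof.
move=> h1 h2 ht P10; rewrite PobsE P10 mul0r !mulr0 !add0r mulrA.
have [E|ne] := eqVneq ((1 - t) * Pobs D l mu2 w) 0; first by rewrite E !mul0r.
suff -> : Mupd D l (convcomb t mu1 mu2) w = Mupd D l mu2 w by [].
move: ne; rewrite mulf_eq0 negb_or => /andP[nt nP].
apply: boolp.funext => th; rewrite /Mupd /convcomb.
have Z := Pobs0_num Hwf (simplex_nonneg h1) P10 th.
rewrite PobsE P10 mulr0 add0r.
set g := (1 - p_ D th l) * q_ D th l w.
have -> : g * (t * mu1 th + (1 - t) * mu2 th) = t * (g * mu1 th) + (1 - t) * (g * mu2 th)
  by ring.
rewrite Z mulr0 add0r; field.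
by rewrite nt nP.
Qed.

Lemma persp_concave (V : belief R Th -> R) l w : concave_on V ->
  concave_on (fun mu => Pobs D l mu w * V (Mupd D l mu w)).
Proof.
move=> hV mu1 mu2 t h1 h2 ht.
have n1 := simplex_nonneg h1; have n2 := simplex_nonneg h2.
case: (Pobs_cases Hwf l w n1) => [P10|P1p]; first exact: persp_zero.
case: (Pobs_cases Hwf l w n2) => [P20|P2p].
  have -> : convcomb t mu1 mu2 = convcomb (1 - t) mu2 mu1.
    by apply: boolp.funext => th; rewrite /convcomb; ring.
  have ht' : 0 <= 1 - t <= 1 by move: ht => /andP[? ?]; apply/andP; split; lra.
  have := @persp_zero V l w mu2 mu1 (1 - t) h2 h1 ht' P20.
  have -> : 1 - (1 - t) = t by ring.
  by rewrite addrC.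
move: ht => /andP[t0 t1].
set P1 := Pobs D l mu1 w; set P2 := Pobs D l mu2 w.
have Pp : 0 < t * P1 + (1 - t) * P2.
  move: t0; rewrite le_eqVlt => /orP[/eqP <-|tp].
    by rewrite mul0r add0r subr0 mul1r.
  have : 0 < t * P1 by exact: mulr_gt0.
  have : 0 <= (1 - t) * P2 by rewrite mulr_ge0 ?subr_ge0 // ltW.
  move=> ? ?; lra.
set lam := t * P1 / (t * P1 + (1 - t) * P2).
have Eb : Mupd D l (convcomb t mu1 mu2) w = convcomb lam (Mupd D l mu1 w) (Mupd D l mu2 w).
  apply: boolp.funext => th; rewrite /Mupd /convcomb PobsE -/P1 -/P2 /lam.
  field; rewrite -/P1 -/P2.
  by rewrite !gt_eqF.
have l0 : 0 <= lam by rewrite /lam divr_ge0 // ?mulr_ge0 // ltW.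
have l1 : lam <= 1.
  rewrite /lam ler_pdivrMr // mul1r lerDl mulr_ge0 // ?subr_ge0 // ltW //.
have := hV _ _ lam (Mupd_simplex Hwf n1 P1p) (Mupd_simplex Hwf n2 P2p).
rewrite l0 l1 => /(_ isT) hc.
rewrite PobsE -/P1 -/P2 Eb.
have -> : t * (P1 * V (Mupd D l mu1 w)) + (1 - t) * (P2 * V (Mupd D l mu2 w)) =
  (t * P1 + (1 - t) * P2) * (lam * V (Mupd D l mu1 w) + (1 - lam) * V (Mupd D l mu2 w)).
  rewrite /lam; field; by rewrite gt_eqF.
by rewrite ler_wpM2l // ltW.
Qed.

Lemma concave_ext f g : concave_on f -> (forall mu, in_simplex mu -> f mu = g mu) ->
  concave_on g.
Proof.
move=> hf E mu1 mu2 t h1 h2 ht.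
by rewrite -!E //; [exact: hf|exact: simplex_conv].
Qed.

Lemma lin_concave (P : pred Th) (g : Th -> R) c :
  concave_on (fun mu => \sum_(th | P th) g th * mu th + c).
Proof. by move=> mu1 mu2 t _ _ _; rewrite conv_sum le_eqVlt; apply/orP; left; apply/eqP; ring. Qed.

Lemma concave_add f g : concave_on f -> concave_on g -> concave_on (fun mu => f mu + g mu).
Proof.
move=> hf hg mu1 mu2 t h1 h2 ht.
have := hf _ _ _ h1 h2 ht; have := hg _ _ _ h1 h2 ht.
have -> : t * (f mu1 + g mu1) + (1 - t) * (f mu2 + g mu2) =
  (t * f mu1 + (1 - t) * f mu2) + (t * g mu1 + (1 - t) * g mu2) by ring.
move=> a b; exact: lerD.
Qed.

Lemma concave_sumw (f : Om -> belief R Th -> R) : (forall w, concave_on (f w)) ->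
  concave_on (fun mu => \sum_w f w mu).
Proof.
move=> hf mu1 mu2 t h1 h2 ht.
rewrite !mulr_sumr -big_split; apply: ler_sum => w _; exact: hf.
Qed.

Lemma minR_concave (I : finType) (i0 : I) (f : I -> belief R Th -> R) :
  (forall i, concave_on (f i)) -> concave_on (fun mu => minR i0 (fun i => f i mu)).
Proof.
move=> hf mu1 mu2 t h1 h2 /[dup] ht /andP[t0 t1]; apply: minR_ge => i.
apply: le_trans (hf i _ _ _ h1 h2 ht).
by apply: lerD; apply: ler_wpM2l; rewrite ?subr_ge0 ?minR_le.
Qed.

Lemma death_concave k l : concave_on (fun mu => Pdeath D l mu * Jf e k (Mbar D l mu)).
Proof.
apply: (@concave_ext (fun mu => \sum_(th | predT th)
   (if k is 0 then 0 else eta_b e th * p_ D th l) * mu th + 0)).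
  exact: lin_concave.
move=> mu hs; rewrite addr0; case: k => [|k] /=.
  by rewrite mulr0 big1 // => th _; rewrite mul0r.
rewrite mulr_sumr; apply: eq_bigr => th _; rewrite /Mbar.
have := Pdeath_gt0 Hwf l hs; move: (Pdeath D l mu) => P Pp.
field; by rewrite gt_eqF.
Qed.

Lemma acq_concave V k l : concave_on V -> concave_on (acq D e V (Jf e k) l).
Proof.
move=> hV; rewrite /acq.
apply: concave_add; last by apply: concave_sumw => w; exact: persp_concave.
apply: concave_add; last exact: death_concave.
move=> mu1 mu2 t _ _ _; rewrite le_eqVlt; apply/orP; left; apply/eqP; ring.
Qed.

Lemma stuff_concave V k a : concave_on V -> concave_on (stuff D e V (Jf e k) a).
Proof.
case: a => [l|thh] hV /=; first exact: acq_concave.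
apply: (@concave_ext (fun mu => \sum_(th | th != thh) eta_a e th * mu th + 0)).
  exact: lin_concave.
by move=> mu _; rewrite addr0.
Qed.

Variable th0 : Th.
Notation HH := (H D e th0).
Notation HN := (Hn D e th0).

Lemma Hn_concave n : concave_on (HN n).
Proof.
elim: n => [|n IH]; first by move=> mu1 mu2 t _ _ _ /=; rewrite !mulr0 addr0.
have := @minR_concave _ (inr th0) (fun a => stuff D e (HN n) (Jf e n) a).
by apply=> a; apply: stuff_concave.
Qed.

Lemma H_concave : concave_on HH.
Proof.
move=> mu1 mu2 t h1 h2 /[dup] ht /andP[t0 t1].
apply/ler_addgt0Pr => eps he.
have [N1 HN1] := H_approx Hwf Hpos th0 h1 he.
have [N2 HN2] := H_approx Hwf Hpos th0 h2 he.
have a1 := HN1 (maxn N1 N2) (leq_maxl _ _).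
have a2 := HN2 (maxn N1 N2) (leq_maxr _ _).
have c := Hn_concave (maxn N1 N2) h1 h2 ht.
have b := H_ge D e th0 (maxn N1 N2) (convcomb t mu1 mu2).
move: a1 a2 c b; set x1 := HN _ mu1; set x2 := HN _ mu2; set y := HN _ (convcomb _ _ _).
move=> a1 a2 c b.
have d1 : t * HH mu1 <= t * (x1 + eps) by rewrite ler_wpM2l // ltW // -ltrBlDr.
have d2 : (1 - t) * HH mu2 <= (1 - t) * (x2 + eps).
  by rewrite ler_wpM2l ?subr_ge0 // ltW // -ltrBlDr.
move: d1 d2; rewrite !mulrDr => d1 d2.
have : t * eps + (1 - t) * eps = eps by ring.
lra.
Qed.

Definition F (nu : bool) l mu :=
  if nu then acq D e HH (Jf e 1) l mu else Jf e 1 mu + eta_c e l * c_ D l.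

Lemma F_concave nu l : concave_on (F nu l).
Proof.
case: nu; first exact: acq_concave H_concave.
exact: lin_concave.
Qed.

End Conc.

Section Final.
Variables (R : realType) (Th La Om : finType).
Variables (D : model R Th La Om) (e : weights R Th La).
Hypothesis Hwf : model_wf D.
Hypothesis Hpos : weights_pos e.
Variables (th0 : Th) (l0 : La).
Implicit Types (mu x : belief R Th) (t : R).

Lemma Qstar_lE nu l mu : in_simplex mu ->
  Qstar_l D e l mu nu = (F D e th0 nu l mu)%:E.
Proof.
move=> hs; have h := simplex_nonneg hs.
case: nu; rewrite /Qstar_l /F /=.
- rewrite subrr mul0e add0e mul1e Vstar_false //; last exact: Mbar_nonneg.
  rewrite (eq_bigr (fun w => (Pobs D l mu w * H D e th0 (Mupd D l mu w))%:E)).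
    by rewrite sumEFin -EFinM -!EFinD /acq addrA.
  move=> w _; case: (Pobs_cases Hwf l w h) => [->|hp]; first by rewrite !mul0e mul0r.
  rewrite (Vstar_true Hwf Hpos th0) ?EFinM //; exact: Mupd_simplex.
- by rewrite subr0 mul1e mul0e adde0 Vstar_false // -EFinD.
Qed.

Lemma Qstar_E nu mu : in_simplex mu ->
  Qstar D e mu nu = (minR l0 (fun l => F D e th0 nu l mu))%:E.
Proof.
move=> hs; rewrite /Qstar.
have -> : (fun l => Qstar_l D e l mu nu) = (fun l => (F D e th0 nu l mu)%:E).
  by apply: boolp.funext => l; exact: Qstar_lE.
exact: einf_range.
Qed.

Lemma Qbar_E nu mu : Qbar e mu nu = (minR th0 (fun thh => Qbar_th e thh mu nu))%:E.
Proof. exact: einf_range. Qed.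

Lemma Qbar_th_conv thh nu t mu1 mu2 :
  Qbar_th e thh (convcomb t mu1 mu2) nu =
  t * Qbar_th e thh mu1 nu + (1 - t) * Qbar_th e thh mu2 nu.
Proof. by rewrite /Qbar_th !conv_sum; ring. Qed.

Lemma vertex_sum (g : Th -> R) th : \sum_th' g th' * vertex R th th' = g th.
Proof.
rewrite (bigD1 th) //= /vertex eqxx mulr1 big1 ?addr0 // => i /negbTE ->.
by rewrite mulr0.
Qed.

Lemma vertex_simplex (th : Th) : in_simplex (vertex R th).
Proof.
split; first by move=> th'; exact: ler0n.
have := vertex_sum (fun=> 1) th.
by under eq_bigr do rewrite mul1r.
Qed.

Lemma F_pos_vertex nu l th :
  Qbar_th e th (vertex R th) nu < F D e th0 nu l (vertex R th).
Proof.
have hs := vertex_simplex th; have h := simplex_nonneg hs.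
have ec : 0 < eta_c e l * c_ D l by case: Hpos => _ _ ?; case: Hwf => _ _ _ ?; exact: mulr_gt0.
case: nu; rewrite /Qbar_th /F /=.
- rewrite subrr mul0r add0r mul1r.
  have -> : \sum_(th' | th' != th) eta_a e th' * vertex R th th' = 0.
    by apply: big1 => i /negbTE; rewrite /vertex => ->; rewrite mulr0.
  rewrite /acq -addrA ltr_pwDl //.
  apply: addr_ge0.
    apply: mulr_ge0; first exact: Pdeath_ge0.
    by apply: (Jf_ge0 Hpos); exact: Mbar_nonneg.
  apply: sumr_ge0 => w _; apply: mulr_ge0; first exact: Pobs_ge0.
  exact: H_ge0.
- rewrite subr0 mul1r mul0r addr0 vertex_sum.
  by rewrite ltrDl.
Qed.

Lemma Qstar_vertex nu th :
  ((Qbar_th e th (vertex R th) nu)%:E < Qstar D e (vertex R th) nu)%E.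
Proof.
rewrite Qstar_E; last exact: vertex_simplex.
rewrite lte_fin.
have [l /eqP ->] := minR_ex l0 (fun l => F D e th0 nu l (vertex R th)).
exact: F_pos_vertex.
Qed.

Lemma Qstar_concave nu mu1 mu2 t :
  in_simplex mu1 -> in_simplex mu2 -> 0 <= t <= 1 ->
  (t%:E * Qstar D e mu1 nu + (1 - t)%:E * Qstar D e mu2 nu
     <= Qstar D e (convcomb t mu1 mu2) nu)%E.
Proof.
move=> h1 h2 ht; rewrite !Qstar_E //; last exact: simplex_conv.
rewrite -!EFinM -EFinD lee_fin.
apply: (@minR_concave _ _ _ l0 (fun l => F D e th0 nu l) _ mu1 mu2 t h1 h2 ht) => l.
exact: (F_concave Hwf Hpos).
Qed.

End Final.


Theorem proposition4 (R : realType) (Th La Om : finType)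
    (D : model R Th La Om) (e : weights R Th La) (nu : bool) :
  (0 < #|Th|)%N -> (0 < #|La|)%N -> (0 < #|Om|)%N ->
  model_wf D -> weights_pos e ->
  [/\ (* concavity of mu |-> Q*(mu, nu; eta) on the simplex *)
      (forall (mu1 mu2 : belief R Th) (t : R),
         in_simplex mu1 -> in_simplex mu2 -> 0 <= t <= 1 ->
         (t%:E * Qstar D e mu1 nu + (1 - t)%:E * Qstar D e mu2 nu
            <= Qstar D e (convcomb t mu1 mu2) nu)%E),
      (* strict inequality at the vertices *)
      (forall th : Th, (Qbar e (vertex R th) nu < Qstar D e (vertex R th) nu)%E),
      (* T(eta) is the union of the |Theta| regions T_thh(eta) ... *)
      Tset D e nu = \bigcup_(thh in [set: Th]) Treg D e nu thh,
      (* ... each of which is convex and contains its vertex ... *)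
      (forall thh : Th,
         Treg D e nu thh (vertex R thh) /\
         forall (mu1 mu2 : belief R Th) (t : R),
           Treg D e nu thh mu1 -> Treg D e nu thh mu2 -> 0 <= t <= 1 ->
           Treg D e nu thh (convcomb t mu1 mu2))
    & (* T(eta) contains every vertex *)
      (forall th : Th, Tset D e nu (vertex R th))].
Proof.
move=> /card_gt0P[th0 _] /card_gt0P[l0 _] _ Hwf Hpos.
have Qv : forall th, ((Qbar_th e th (vertex R th) nu)%:E < Qstar D e (vertex R th) nu)%E.
  by move=> th; exact: (Qstar_vertex Hwf Hpos th0 l0).
have Qb : forall th mu, (Qbar e mu nu <= (Qbar_th e th mu nu)%:E)%E.
  by move=> th mu; apply: ereal_inf_lbound; exists th.
split.
- by move=> mu1 mu2 t h1 h2 ht; exact: (Qstar_concave Hwf Hpos th0 l0).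
- by move=> th; apply: le_lt_trans (Qb th _) (Qv th).
- apply/seteqP; split => mu /=.
  + move=> [hs hle]; move: hle; rewrite (Qbar_E e th0).
    have [thh /eqP ->] := minR_ex th0 (fun thh => Qbar_th e thh mu nu).
    by move=> hle; exists thh => //.
  + move=> [thh _ [hs hle]]; split => //.
    exact: le_trans (Qb thh mu) hle.
- move=> thh; split.
    by split; [exact: vertex_simplex|exact: ltW].
  move=> mu1 mu2 t [h1 q1] [h2 q2] ht; split; first exact: simplex_conv.
  have hc : in_simplex (convcomb t mu1 mu2) by exact: simplex_conv.
  move: q1 q2; rewrite (Qstar_E Hwf Hpos th0 l0 nu h1) (Qstar_E Hwf Hpos th0 l0 nu h2).
  rewrite (Qstar_E Hwf Hpos th0 l0 nu hc) !lee_fin.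
  rewrite Qbar_th_conv => q1 q2.
  apply: le_trans (@minR_concave _ _ _ l0 (fun l => F D e th0 nu l) _ mu1 mu2 t h1 h2 ht); last first.
    by move=> l; exact: (F_concave Hwf Hpos).
  move: ht => /andP[t0 t1].
  by apply: lerD; apply: ler_wpM2l; rewrite ?subr_ge0.
- move=> th; split; first exact: vertex_simplex.
  exact/ltW/(le_lt_trans (Qb th _) (Qv th)).
Qed.
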